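(* For any $q\in(1/2,1)$ and integers $K\ge1$, $1\le C\le K/2$, we have $\lambda^*(q,K,C)>1-\frac{1}{2q}$. Moreover, for any fixed $q\in(1/2,1)$ and any $\overline{\lambda}>1-\frac{1}{2q}$, there exist $\underline{K},\underline{C}$ such that whenever $K\ge\underline{K}$ and $C\ge\underline{C}$ (with $C\le K/2$), we have $\lambda^*(q,K,C)\le\overline{\lambda}$.
   Context: For parameters $q\in(1/2,1)$, integers $K\ge1$, $1\le C\le K/2$, and $\lambda\in[0,1]$, let $P_k(x,\lambda)=\mathbb{P}[\mathrm{Binom}(K,\lambda x+(1-\lambda)q)=k]$ for $x\in[0,1]$, and define the majority-rule inflow accuracy function $$\phi_{\sigma^{\mathrm{maj}}}(x)=\frac{q+C\sum_{k>K/2}P_k(x,\lambda)+qC\,P_{K/2}(x,\lambda)}{1+C},$$ where the $P_{K/2}$ term is present only when $K$ is even. (This is the expected fraction of new popularity score going to correct stories when agents share $C$ stories of their size-$K$ news-feed majority, breaking ties by their own story, and post their own story of precision $q$.) The critical virality weight is $\lambda^*(q,K,C)=\inf\{\lambda\in[0,1]:\phi_{\sigma^{\mathrm{maj}}}(x)=x\text{ for some }x\in[0,1/2]\}$, with $\lambda^*=\infty$ if the set is empty. *)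

(* Defs.v *)
(* concrete reals R, with Coquelicot's Glb_Rbar for the infimum
   (Glb_Rbar of the empty set is p_infty, matching lambda^* = infinity). *)
From Stdlib Require Import Reals Lra Lia Arith.
From Coquelicot Require Import Coquelicot.
Open Scope R_scope.

Definition binom_pmf (K k : nat) (p : R) : R :=
  Binomial.C K k * p ^ k * (1 - p) ^ (K - k).

Definition Pk (q : R) (K k : nat) (x lam : R) : R :=
  binom_pmf K k (lam * x + (1 - lam) * q).

Definition maj_sum (q : R) (K : nat) (x lam : R) : R :=
  sum_f_R0 (fun k => if Nat.ltb K (2 * k) then Pk q K k x lam else 0) K.

Definition tie_term (q : R) (K Cn : nat) (x lam : R) : R :=
  if Nat.even K then q * INR Cn * Pk q K (Nat.div2 K) x lam else 0.

Definition phi_maj (q : R) (K Cn : nat) (lam x : R) : R :=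
  (q + INR Cn * maj_sum q K x lam + tie_term q K Cn x lam) / (1 + INR Cn).

Definition lambda_star (q : R) (K Cn : nat) : Rbar :=
  Glb_Rbar (fun lam => 0 <= lam <= 1 /\
              exists x, 0 <= x <= 1/2 /\ phi_maj q K Cn lam x = x).

(* Main.v *)
Require Import Defs.
From Stdlib Require Import Reals Lra Lia Arith.
From Coquelicot Require Import Coquelicot.
Open Scope R_scope.

Lemma cont_plus f g : continuity f -> continuity g -> continuity (fun x => f x + g x).
Proof. intros; apply continuity_plus; auto. Qed.
Lemma cont_mult f g : continuity f -> continuity g -> continuity (fun x => f x * g x).
Proof. intros; apply continuity_mult; auto. Qed.
Lemma cont_opp f : continuity f -> continuity (fun x => - f x).
Proof. intros; apply continuity_opp; auto. Qed.
Lemma cont_const c : continuity (fun _ => c).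
Proof. apply continuity_const; intros ? ?; reflexivity. Qed.
Lemma cont_id : continuity (fun x => x).
Proof. apply derivable_continuous, derivable_id. Qed.
Lemma cont_pow f n : continuity f -> continuity (fun x => f x ^ n).
Proof. intros H; induction n; simpl. apply cont_const. apply cont_mult; auto. Qed.
Lemma cont_sum (f : nat -> R -> R) n : (forall k, continuity (f k)) ->
  continuity (fun x => sum_f_R0 (fun k => f k x) n).
Proof. intros H; induction n; simpl. apply H. apply cont_plus; auto. Qed.

Lemma cont_binom K k : continuity (fun p => binom_pmf K k p).
Proof. unfold binom_pmf. apply cont_mult. apply cont_mult. apply cont_const.
 apply cont_pow, cont_id. apply cont_pow. apply cont_plus. apply cont_const.
 apply cont_opp, cont_id. Qed.

Definition Smaj K p := sum_f_R0 (fun k => if Nat.ltb K (2*k) then binom_pmf K k p else 0) K.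
Definition Tie K p := if Nat.even K then binom_pmf K (Nat.div2 K) p else 0.
Definition Phi q K Cn p := (q + INR Cn * Smaj K p + q * INR Cn * Tie K p) / (1 + INR Cn).

Lemma phi_eq q K Cn lam x : phi_maj q K Cn lam x = Phi q K Cn (lam*x + (1-lam)*q).
Proof. unfold phi_maj, Phi, Smaj, Tie, tie_term, maj_sum, Pk.
 destruct (Nat.even K). f_equal; ring. f_equal; ring. Qed.

Lemma cont_Phi q K Cn : continuity (Phi q K Cn).
Proof. unfold Phi, Rdiv. apply cont_mult; [|apply cont_const].
 apply cont_plus. apply cont_plus. apply cont_const. apply cont_mult. apply cont_const.
 unfold Smaj. apply (cont_sum (fun k p => if Nat.ltb K (2*k) then binom_pmf K k p else 0)).
 intro k; destruct (Nat.ltb K (2*k)). apply cont_binom. apply cont_const.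
 apply cont_mult. apply cont_const. unfold Tie. destruct (Nat.even K).
 apply cont_binom. apply cont_const. Qed.

Lemma Cpos n k : 0 <= Binomial.C n k.
Proof. unfold Binomial.C. apply Rlt_le. apply Rdiv_lt_0_compat. apply INR_fact_lt_0.
 apply Rmult_lt_0_compat; apply INR_fact_lt_0. Qed.

Lemma binom_nonneg K k p : 0 <= p <= 1 -> 0 <= binom_pmf K k p.
Proof. intros H. unfold binom_pmf. apply Rmult_le_pos. apply Rmult_le_pos. apply Cpos.
 apply pow_le; lra. apply pow_le; lra. Qed.

Lemma binom_sum K p : sum_f_R0 (fun k => binom_pmf K k p) K = 1.
Proof. unfold binom_pmf. rewrite <- binomial. replace (p + (1-p)) with 1 by ring. apply pow1. Qed.

Lemma rev_sum n : forall f, sum_f_R0 f n = sum_f_R0 (fun k => f (n-k)%nat) n.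
Proof. induction n; intros f. simpl. reflexivity.
 rewrite decomp_sum by lia. simpl pred. rewrite (IHn (fun i => f (S i))).
 rewrite tech5. replace (S n - S n)%nat with 0%nat by lia.
 rewrite Rplus_comm. f_equal. apply sum_eq. intros i Hi. f_equal. lia. Qed.

Lemma single_sum f m n : sum_f_R0 (fun k => if Nat.eqb k m then f k else 0) n =
  if Nat.leb m n then f m else 0.
Proof. induction n.
 - simpl. destruct m; simpl; reflexivity.
 - rewrite tech5. cbv beta. rewrite IHn. destruct (Nat.eqb_spec (S n) m).
   + subst. replace (Nat.leb (S n) n) with false by (symmetry; apply Nat.leb_gt; lia).
     replace (Nat.leb (S n) (S n)) with true by (symmetry; apply Nat.leb_le; lia). ring.
   + destruct (Nat.leb_spec m n); destruct (Nat.leb_spec m (S n)); try lia; ring. Qed.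

Lemma sum_nonneg f n : (forall k, (k <= n)%nat -> 0 <= f k) -> 0 <= sum_f_R0 f n.
Proof. induction n; intros H; simpl. apply H; lia.
 assert (0 <= sum_f_R0 f n) by (apply IHn; intros; apply H; lia).
 assert (0 <= f (S n)) by (apply H; lia). lra. Qed.

Lemma term_le_sum f m n : (forall k, (k <= n)%nat -> 0 <= f k) -> (m <= n)%nat -> f m <= sum_f_R0 f n.
Proof. intros Hf; induction n; intros Hm.
 - replace m with 0%nat by lia. simpl; lra.
 - simpl. destruct (Nat.eq_dec m (S n)).
   + subst. assert (0 <= sum_f_R0 f n). { apply sum_nonneg. intros; apply Hf; lia. } lra.
   + assert (f m <= sum_f_R0 f n) by (apply IHn; [intros; apply Hf; lia | lia]).
     assert (0 <= f (S n)) by (apply Hf; lia). lra. Qed.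

Lemma even_cases K : (Nat.even K = true /\ K = (2 * Nat.div2 K)%nat) \/
                     (Nat.even K = false /\ forall k, (2*k <> K)%nat).
Proof. destruct (Nat.even K) eqn:E.
 - left. split; auto. apply Nat.even_spec in E. destruct E as [m Hm]. subst.
   rewrite Nat.div2_double. reflexivity.
 - right. split; auto. intros k Hk. subst. rewrite Nat.even_mul in E. simpl in E. discriminate. Qed.

Lemma tie_sum K p : sum_f_R0 (fun k => if Nat.eqb (2*k) K then binom_pmf K k p else 0) K = Tie K p.
Proof. unfold Tie. destruct (even_cases K) as [[E H]|[E H]]; rewrite E.
 - transitivity (sum_f_R0 (fun k => if Nat.eqb k (Nat.div2 K) then binom_pmf K k p else 0) K).
   2:{ rewrite single_sum. replace (Nat.leb (Nat.div2 K) K) with true by (symmetry; apply Nat.leb_le; lia). reflexivity. }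
   apply sum_eq. intros i Hi. destruct (Nat.eqb_spec (2*i) K); destruct (Nat.eqb_spec i (Nat.div2 K)); try lia; reflexivity.
 - transitivity (sum_f_R0 (fun _ => 0) K). 2:{ rewrite sum_cte; ring. } apply sum_eq. intros i Hi.
   destruct (Nat.eqb_spec (2*i) K). exfalso; apply (H i); auto. reflexivity. Qed.

Lemma G_ge K p : 1/2 <= p <= 1 -> 1 <= 2 * Smaj K p + Tie K p.
Proof. intros Hp.
 set (t := fun k => binom_pmf K k p).
 set (A := fun k => if Nat.ltb K (2*k) then t k else 0).
 set (B := fun k => if Nat.ltb (2*k) K then t k else 0).
 set (D := fun k => if Nat.eqb (2*k) K then t k else 0).
 assert (H1 : 1 = sum_f_R0 A K + sum_f_R0 B K + sum_f_R0 D K).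
 { rewrite <- (binom_sum K p). rewrite <- !sum_plus. apply sum_eq. intros i Hi.
   unfold A, B, D, t. destruct (Nat.ltb_spec K (2*i)); destruct (Nat.ltb_spec (2*i) K);
   destruct (Nat.eqb_spec (2*i) K); try lia; ring. }
 assert (HD : sum_f_R0 D K = Tie K p) by apply tie_sum.
 assert (HA : sum_f_R0 A K = Smaj K p) by reflexivity.
 assert (HB : sum_f_R0 B K <= sum_f_R0 A K).
 { rewrite rev_sum. apply sum_Rle. intros k Hk. unfold A, B, t.
   destruct (Nat.ltb_spec (2*(K-k)) K); destruct (Nat.ltb_spec K (2*k)); try lia.
   - unfold binom_pmf. rewrite <- pascal_step1 by lia.
     replace (K - (K-k))%nat with k by lia.
     assert (exists j d, (K - k = j)%nat /\ k = (j+d)%nat) as [j [d [Hj Hkd]]]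
       by (exists (K-k)%nat, (k-(K-k))%nat; lia).
     rewrite Hj. subst k.
     rewrite !pow_add.
     assert (0 <= Binomial.C K (j+d)) by apply Cpos.
     assert (0 <= p^j) by (apply pow_le; lra).
     assert (0 <= (1-p)^j) by (apply pow_le; lra).
     assert ((1-p)^d <= p^d) by (apply pow_incr; lra).
     assert (0 <= Binomial.C K (j+d) * p^j * (1-p)^j) by (apply Rmult_le_pos; [apply Rmult_le_pos|]; auto).
     replace (Binomial.C K (j + d) * p ^ j * ((1 - p) ^ j * (1 - p) ^ d)) with
       ((Binomial.C K (j+d) * p^j * (1-p)^j) * (1-p)^d) by ring.
     replace (Binomial.C K (j + d) * (p ^ j * p ^ d) * (1 - p) ^ j) with
       ((Binomial.C K (j+d) * p^j * (1-p)^j) * p^d) by ring.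
     apply Rmult_le_compat_l; auto.
   - idtac.
   all: first [lra | apply binom_nonneg; lra]. }
 lra. Qed.

Definition Sp K p := sum_f_R0 (fun k => if Nat.leb K (2*k) then binom_pmf K k p else 0) K.

Lemma term_bound K k p : 0 <= p <= 1/2 -> (K <= 2*k)%nat -> (k <= K)%nat ->
  binom_pmf K k p <= Binomial.C K k * (4*p*(1-p))^(K-k) * (1/2)^K.
Proof. intros Hp H1 H2.
 assert (exists j d, (K - k = j)%nat /\ k = (j+d)%nat /\ K = (2*j+d)%nat) as [j [d [Hj [Hkd HK]]]]
   by (exists (K-k)%nat, (k-(K-k))%nat; lia).
 unfold binom_pmf. rewrite Hj. subst k. rewrite HK at 3. clear HK Hj.
 replace (2*j+d)%nat with (j+j+d)%nat by lia.
 rewrite !pow_add. rewrite !Rpow_mult_distr.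
 assert (0 <= Binomial.C K (j+d)) by apply Cpos.
 assert (0 <= p^j) by (apply pow_le; lra).
 assert (0 <= (1-p)^j) by (apply pow_le; lra).
 assert (p^d <= (1/2)^d) by (apply pow_incr; lra).
 assert (H4j : 4^j * (1/2)^j * (1/2)^j = 1).
 { rewrite <- !Rpow_mult_distr. replace (4 * (1/2) * (1/2)) with 1 by field. apply pow1. }
 assert (0 <= Binomial.C K (j+d) * p^j * (1-p)^j) by (apply Rmult_le_pos; [apply Rmult_le_pos|]; auto).
 replace (Binomial.C K (j + d) * (p ^ j * p ^ d) * (1 - p) ^ j) with
   ((Binomial.C K (j+d) * p^j * (1-p)^j) * p^d) by ring.
 replace (Binomial.C K (j + d) * (4 ^ j * p ^ j * (1 - p) ^ j) * ((1 / 2) ^ j * (1 / 2) ^ j * (1 / 2) ^ d))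
   with ((Binomial.C K (j+d) * p^j * (1-p)^j) * (1/2)^d * (4^j * (1/2)^j * (1/2)^j)) by ring.
 rewrite H4j, Rmult_1_r. apply Rmult_le_compat_l; auto. Qed.

Lemma Sp_bound K p : 0 <= p <= 1/2 -> Sp K p <= ((1 + 4*p*(1-p))/2)^K.
Proof. intros Hp. unfold Sp.
 apply Rle_trans with (sum_f_R0 (fun k => Binomial.C K k * 1^k * (4*p*(1-p))^(K-k) * (1/2)^K) K).
 - apply sum_Rle. intros k Hk. rewrite pow1, Rmult_1_r. destruct (Nat.leb_spec K (2*k)).
   + apply term_bound; auto.
   + apply Rmult_le_pos. apply Rmult_le_pos. apply Cpos. apply pow_le; nra. apply pow_le; lra.
 - rewrite <- scal_sum. rewrite <- binomial. rewrite Rmult_comm, <- Rpow_mult_distr.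
   right. f_equal. field. Qed.

Lemma Smaj_nonneg K p : 0 <= p <= 1 -> 0 <= Smaj K p.
Proof. intros Hp. apply sum_nonneg. intros k _. destruct (Nat.ltb K (2*k)). apply binom_nonneg; auto. lra. Qed.
Lemma Tie_nonneg K p : 0 <= p <= 1 -> 0 <= Tie K p.
Proof. intros Hp. unfold Tie. destruct (Nat.even K). apply binom_nonneg; auto. lra. Qed.

Lemma S_le_Sp K p : 0 <= p <= 1 -> Smaj K p <= Sp K p.
Proof. intros Hp. apply sum_Rle. intros k Hk.
 destruct (Nat.ltb_spec K (2*k)); destruct (Nat.leb_spec K (2*k)); try lia; try lra.
 apply binom_nonneg; auto. Qed.

Lemma T_le_Sp K p : 0 <= p <= 1 -> Tie K p <= Sp K p.
Proof. intros Hp. unfold Tie. destruct (even_cases K) as [[E H]|[E H]]; rewrite E.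
 - unfold Sp. set (f := fun k => if Nat.leb K (2*k) then binom_pmf K k p else 0).
   apply Rle_trans with (f (Nat.div2 K)).
   + unfold f. replace (Nat.leb K (2 * Nat.div2 K)) with true by (symmetry; apply Nat.leb_le; lia). lra.
   + apply term_le_sum. intros k _. unfold f. destruct (Nat.leb K (2*k)). apply binom_nonneg; auto. lra. lia.
 - apply sum_nonneg. intros k _. destruct (Nat.leb K (2*k)). apply binom_nonneg; auto. lra. Qed.

Lemma Phi_gt q K Cn p : 1/2 < q -> 1 <= 2 * Smaj K p + Tie K p -> 0 <= Tie K p ->
  1/2 < Phi q K Cn p.
Proof. intros Hq H1 H2. unfold Phi. assert (HC : 0 <= INR Cn) by apply pos_INR.
 apply (Rmult_lt_reg_r (1 + INR Cn)); [lra|].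
 set (S := Smaj K p) in *. set (T := Tie K p) in *.
 replace ((q + INR Cn * S + q * INR Cn * T) / (1 + INR Cn) * (1 + INR Cn)) with
   (q + INR Cn * S + q * INR Cn * T) by (field; lra).
 assert (INR Cn * (1 - 2*S - T) <= 0) by nra.
 assert (0 <= INR Cn * T * (q - 1/2)) by (apply Rmult_le_pos; [apply Rmult_le_pos|]; lra).
 nra. Qed.

Lemma Phi_pos q K Cn p : 0 < q -> 0 <= p <= 1 -> 0 < Phi q K Cn p.
Proof. intros Hq Hp. unfold Phi. assert (HC : 0 <= INR Cn) by apply pos_INR.
 pose proof (Smaj_nonneg K p Hp). pose proof (Tie_nonneg K p Hp).
 apply Rdiv_lt_0_compat; [|lra].
 assert (0 <= INR Cn * Smaj K p) by (apply Rmult_le_pos; lra).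
 assert (0 <= q * INR Cn * Tie K p) by (apply Rmult_le_pos; [apply Rmult_le_pos|]; lra).
 lra. Qed.

Lemma cont_comp f g : continuity f -> continuity g -> continuity (fun x => g (f x)).
Proof. intros Hf Hg x. apply (continuity_pt_comp f g x); auto. Qed.

Theorem proposition5 :
  (forall (q : R) (K Cn : nat),
     1/2 < q < 1 -> (1 <= K)%nat -> (1 <= Cn)%nat -> (2 * Cn <= K)%nat ->
     Rbar_lt (Finite (1 - 1 / (2 * q))) (lambda_star q K Cn))
  /\
  (forall (q lbar : R),
     1/2 < q < 1 -> 1 - 1 / (2 * q) < lbar ->
     exists Klow Clow : nat,
       forall K Cn : nat,
         (Klow <= K)%nat -> (Clow <= Cn)%nat -> (1 <= Cn)%nat -> (2 * Cn <= K)%nat ->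
         Rbar_le (lambda_star q K Cn) (Finite lbar)).
Proof.
split.
- intros q K Cn Hq HK HC HCK.
  set (P := Phi q K Cn).
  assert (Hclaim : exists eta, 0 < eta /\ forall p, 1/2 - eta <= p <= 1 -> 1/2 < P p).
  { assert (Hh : 1/2 < P (1/2)).
    { apply Phi_gt. lra. apply G_ge; lra. apply Tie_nonneg; lra. }
    pose proof (cont_Phi q K Cn (1/2)) as Hc.
    unfold continuity_pt, continue_in, limit1_in, limit_in in Hc.
    destruct (Hc (P (1/2) - 1/2)) as [alp [Halp Hal]]. lra.
    exists (Rmin alp (1/2) / 2). split. assert (0 < Rmin alp (1/2)) by (apply Rmin_glb_lt; lra). lra.
    intros p Hp. destruct (Rle_or_lt (1/2) p).
    - apply Phi_gt. lra. apply G_ge; lra. apply Tie_nonneg; lra.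
    - assert (Hm : Rmin alp (1/2) <= alp) by apply Rmin_l.
      assert (Hm2 : 0 < Rmin alp (1/2)) by (apply Rmin_glb_lt; lra).
      specialize (Hal p). simpl in Hal. unfold R_dist in Hal.
      assert (Hd : Rabs (P p - P (1/2)) < P (1/2) - 1/2).
      { apply Hal. split. split. exact I. lra.
        rewrite Rabs_left by lra. lra. }
      apply Rabs_def2 in Hd. unfold P in *. lra. }
  destruct Hclaim as [eta [Heta Hcl]].
  assert (Hw : 1 / (2*q) * q = 1/2) by (field; lra).
  set (lam1 := 1 - 1/(2*q) + eta/q).
  assert (Hl1 : (1 - lam1) * q = 1/2 - eta) by (unfold lam1; field; lra).
  assert (Hpos : 0 < eta / q) by (apply Rdiv_lt_0_compat; lra).
  pose proof (Glb_Rbar_correct (fun lam => 0 <= lam <= 1 /\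
              exists x, 0 <= x <= 1/2 /\ phi_maj q K Cn lam x = x)) as [Hlb Hgr].
  assert (Hb : is_lb_Rbar (fun lam => 0 <= lam <= 1 /\
              exists x, 0 <= x <= 1/2 /\ phi_maj q K Cn lam x = x) (Finite lam1)).
  { intros l [Hl [x [Hx Hfx]]]. simpl. destruct (Rle_or_lt lam1 l) as [Hle|Hlt]; auto.
    exfalso. rewrite phi_eq in Hfx.
    assert (H1 : 1/2 - eta <= l*x + (1-l)*q).
    { assert (0 <= l * x) by (apply Rmult_le_pos; lra). nra. }
    assert (H2 : l*x + (1-l)*q <= 1).
    { assert (l * x <= l * (1/2)) by (apply Rmult_le_compat_l; lra).
      assert ((1-l) * q <= (1-l) * 1) by (apply Rmult_le_compat_l; lra). lra. }
    specialize (Hcl _ (conj H1 H2)). unfold P in Hcl. lra. }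
  specialize (Hgr _ Hb). unfold lambda_star.
  destruct (Glb_Rbar _) as [g| |]; simpl in *; unfold lam1 in *; try lra; auto.
- intros q lbar Hq Hl.
  set (lam := Rmin lbar 1).
  assert (Hlam1 : lam <= lbar) by apply Rmin_l.
  assert (Hlam2 : lam <= 1) by apply Rmin_r.
  set (w := 1/(2*q)) in *.
  assert (Hw : w * q = 1/2) by (unfold w; field; lra).
  assert (Hw0 : 0 < w) by (unfold w; apply Rdiv_lt_0_compat; lra).
  assert (Hw1 : w < 1) by nra.
  assert (Hlam3 : 1 - w < lam) by (unfold lam, Rmin; destruct (Rle_dec lbar 1); lra).
  assert (Hlam0 : 0 < lam) by lra.
  set (u := 1/2 - (1-lam)*q).
  assert (Hu : 0 < u) by (unfold u; nra).
  assert (Hu2 : u <= lam) by (unfold u; nra).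
  set (delta := u/2).
  set (xs := delta/lam).
  assert (Hxs : lam * xs = delta) by (unfold xs; field; lra).
  assert (Hxs1 : delta <= xs) by (unfold delta in *; nra).
  assert (Hxs2 : xs <= 1/2) by (unfold delta in *; nra).
  assert (Hps : lam * xs + (1-lam)*q = 1/2 - delta) by (rewrite Hxs; unfold delta, u; field).
  set (g := (1 + 4*(1/2-delta)*(1-(1/2-delta)))/2).
  assert (Hg : g = 1 - 2*delta^2) by (unfold g; field).
  assert (Hdel : delta <= 1/4).
  { unfold delta, u. assert (0 <= (1-lam)*q) by (apply Rmult_le_pos; lra). lra. }
  assert (Hg0 : 0 < g) by (rewrite Hg; unfold delta in *; nra).
  assert (Hg1 : g < 1) by (rewrite Hg; unfold delta in *; nra).
  destruct (pow_lt_1_zero g) with (y := delta/8) as [N HN].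
  { rewrite Rabs_right; lra. }
  { unfold delta; lra. }
  destruct (INR_unbounded (4*q/delta)) as [C0 HC0].
  exists N, C0. intros K Cn HK HC HC1 HCK.
  assert (HE : (fun lam => 0 <= lam <= 1 /\
              exists x, 0 <= x <= 1/2 /\ phi_maj q K Cn lam x = x) lam).
  { split. lra.
    set (f := fun x => x - Phi q K Cn (lam*x + (1-lam)*q)).
    assert (Hf : continuity f).
    { unfold f. apply cont_plus. apply cont_id. apply cont_opp.
      apply (cont_comp (fun x => lam*x + (1-lam)*q) (Phi q K Cn)).
      apply cont_plus. apply cont_mult. apply cont_const. apply cont_id. apply cont_const.
      apply cont_Phi. }
    assert (Hf0 : f 0 < 0).
    { unfold f. assert (0 < Phi q K Cn (lam * 0 + (1 - lam) * q)).
      { apply Phi_pos. lra. split. nra. nra. } lra. }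
    assert (Hfx : 0 < f xs).
    { unfold f. rewrite Hps.
      set (p := 1/2 - delta).
      assert (Hp : 0 <= p <= 1/2) by (unfold p, delta in *; lra).
      assert (Hp' : 0 <= p <= 1) by lra.
      pose proof (S_le_Sp K p Hp') as HS1. pose proof (T_le_Sp K p Hp') as HT1.
      assert (HSg : Sp K p <= g^K) by exact (Sp_bound K p Hp).
      assert (HgK : g^K < delta/8).
      { specialize (HN K HK). pose proof (Rle_abs (g^K)). lra. }
      pose proof (Smaj_nonneg K p Hp'). pose proof (Tie_nonneg K p Hp').
      assert (HCr : INR C0 <= INR Cn) by (apply le_INR; lia).
      assert (HCq : 4*q < INR Cn * delta).
      { assert (4*q/delta*delta = 4*q) by (field; unfold delta; lra).
        assert (0 < delta) by (unfold delta; lra). nra. }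
      assert (HCn : 0 <= INR Cn) by apply pos_INR.
      assert (Phi q K Cn p < xs).
      { unfold Phi. apply (Rmult_lt_reg_r (1 + INR Cn)); [lra|].
        replace ((q + INR Cn * Smaj K p + q * INR Cn * Tie K p) / (1 + INR Cn) * (1 + INR Cn)) with
          (q + INR Cn * Smaj K p + q * INR Cn * Tie K p) by (field; lra).
        assert (INR Cn * Smaj K p <= INR Cn * (delta/8)) by (apply Rmult_le_compat_l; lra).
        assert (INR Cn * Tie K p <= INR Cn * (delta/8)) by (apply Rmult_le_compat_l; lra).
        assert (q * (INR Cn * Tie K p) <= 1 * (INR Cn * Tie K p)) by
          (apply Rmult_le_compat_r; [apply Rmult_le_pos|]; lra).
        assert (delta * (1 + INR Cn) <= xs * (1 + INR Cn)) by (apply Rmult_le_compat_r; lra).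
        assert (0 < delta) by (unfold delta; lra).
        nra. }
      lra. }
    destruct (IVT f 0 xs Hf) as [z [Hz Hfz]]; [unfold delta in *; lra|auto|auto|].
    exists z. split. lra. rewrite phi_eq. unfold f in Hfz. lra. }
  pose proof (Glb_Rbar_correct (fun lam => 0 <= lam <= 1 /\
              exists x, 0 <= x <= 1/2 /\ phi_maj q K Cn lam x = x)) as [Hlb Hgr].
  specialize (Hlb lam HE). unfold lambda_star.
  destruct (Glb_Rbar _) as [gg| |]; simpl in *; try lra; auto.
Qed.
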